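(* Let $\mathbb{X},\mathbb{Y}$ be real normed spaces, $\epsilon\in[0,1)$, and $T\in\mathbb{B}(\mathbb{X},\mathbb{Y})$ nonzero. Then for any $A\in\mathbb{B}(\mathbb{X},\mathbb{Y})$, $T\perp_B^{\epsilon}A$ if and only if (a) or (b) holds: (a) there exists a sequence $(x_n)$ of unit vectors in $\mathbb{X}$ such that $\|Tx_n\|\to\|T\|$, and $\lim_{n\to\infty}\|Ax_n\|$ exists and is $\le\epsilon\|A\|$; (b) there exist sequences $(x_n),(y_n)$ of unit vectors in $\mathbb{X}$ and sequences $(\epsilon_n),(\delta_n)$ of positive reals such that: (i) $\epsilon_n\to0$, $\delta_n\to0$, $\|Tx_n\|\to\|T\|$, $\|Ty_n\|\to\|T\|$; (ii) for all $n$ and all $\lambda\ge0$, $\|Tx_n+\lambda Ax_n\|^2\ge(1-\epsilon_n^2)\|Tx_n\|^2-2\epsilon\sqrt{1-\epsilon_n^2}\,\|Tx_n\|\|\lambda A\|$; (iii) for all $n$ and all $\lambda\le0$, $\|Ty_n+\lambda Ay_n\|^2\ge(1-\delta_n^2)\|Ty_n\|^2-2\epsilon\sqrt{1-\delta_n^2}\,\|Ty_n\|\|\lambda A\|$.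
   Context: $\mathbb{B}(\mathbb{X},\mathbb{Y})$ is the space of bounded linear operators from $\mathbb{X}$ to $\mathbb{Y}$ with the operator norm. For $\epsilon\in[0,1)$ and $u,v$ in a normed space, $u\perp_B^{\epsilon}v$ means $\|u+\lambda v\|^2\ge\|u\|^2-2\epsilon\|u\|\|\lambda v\|$ for all $\lambda\in\mathbb{R}$. *)

(* Defs.v *)
From Stdlib Require Import Reals Lra ClassicalEpsilon.
Open Scope R_scope.

Record NormedSpace : Type := {
  carrier :> Type;
  zero : carrier;
  add : carrier -> carrier -> carrier;
  opp : carrier -> carrier;
  scal : R -> carrier -> carrier;
  norm : carrier -> R;
  add_assoc : forall x y z, add x (add y z) = add (add x y) z;
  add_comm : forall x y, add x y = add y x;
  add_zero : forall x, add x zero = x;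
  add_opp : forall x, add x (opp x) = zero;
  scal_assoc : forall a b x, scal a (scal b x) = scal (a * b) x;
  scal_one : forall x, scal 1 x = x;
  scal_distr_l : forall a x y, scal a (add x y) = add (scal a x) (scal a y);
  scal_distr_r : forall a b x, scal (a + b) x = add (scal a x) (scal b x);
  norm_eq_zero : forall x, norm x = 0 -> x = zero;
  norm_scal : forall a x, norm (scal a x) = Rabs a * norm x;
  norm_triangle : forall x y, norm (add x y) <= norm x + norm y
}.

Arguments zero {n}.
Arguments add {n}.
Arguments opp {n}.
Arguments scal {n}.
Arguments norm {n}.

Definition is_bounded_linear {X Y : NormedSpace} (T : X -> Y) : Prop :=
  (forall x y, T (add x y) = add (T x) (T y)) /\
  (forall (a : R) x, T (scal a x) = scal a (T x)) /\
  (exists M : R, forall x, norm (T x) <= M * norm x).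

(* Operator norm: ||T|| = sup { ||T x|| : ||x|| <= 1 } (chosen by epsilon;
   for a bounded linear T this supremum exists). *)
Definition opnorm_set {X Y : NormedSpace} (T : X -> Y) (r : R) : Prop :=
  exists x : X, norm x <= 1 /\ r = norm (T x).

Definition opnorm {X Y : NormedSpace} (T : X -> Y) : R :=
  epsilon (inhabits 0) (fun c => is_lub (opnorm_set T) c).

Definition op_add {X Y : NormedSpace} (T A : X -> Y) : X -> Y :=
  fun x => add (T x) (A x).
Definition op_scal {X Y : NormedSpace} (l : R) (A : X -> Y) : X -> Y :=
  fun x => scal l (A x).

Definition bj_eps_orth {V : Type} (nrm : V -> R) (ad : V -> V -> V)
  (sc : R -> V -> V) (eps : R) (u v : V) : Prop :=
  forall l : R,
    (nrm (ad u (sc l v))) ^ 2 >= (nrm u) ^ 2 - 2 * eps * nrm u * nrm (sc l v).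

Definition op_bj_eps_orth {X Y : NormedSpace} (eps : R) (T A : X -> Y) : Prop :=
  bj_eps_orth opnorm op_add op_scal eps T A.

(* Main.v *)
Require Import Defs.
From Stdlib Require Import Reals Lra Psatz ClassicalEpsilon Classical FunctionalExtensionality.
Open Scope R_scope.


Section V.
Variable V : NormedSpace.
Implicit Types x y z : V.

Lemma add_zero_l x : add zero x = x.
Proof. rewrite add_comm; apply add_zero. Qed.

Lemma add_cancel_r x y : add x y = x -> y = zero.
Proof.
  intros H. rewrite <- (add_zero V y), <- (add_opp V x), add_assoc, (add_comm V y x), H.
  reflexivity.
Qed.

Lemma scal_zero_l x : scal 0 x = zero.
Proof.
  apply (add_cancel_r (scal 0 x)). rewrite <- scal_distr_r. f_equal. ring.
Qed.

Lemma opp_unique x y : add x y = zero -> y = opp x.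
Proof.
  intros H. rewrite <- (add_zero V y), <- (add_opp V x), add_assoc,
    (add_comm V y x), H, add_zero_l. reflexivity.
Qed.

Lemma opp_scal x : opp x = scal (-1) x.
Proof.
  symmetry; apply opp_unique. rewrite <- (scal_one V x) at 1.
  rewrite <- scal_distr_r. replace (1 + -1) with 0 by ring. apply scal_zero_l.
Qed.

Lemma norm_zero : norm (@zero V) = 0.
Proof.
  rewrite <- (scal_zero_l zero), norm_scal, Rabs_R0. ring.
Qed.

Lemma norm_opp x : norm (opp x) = norm x.
Proof. rewrite opp_scal, norm_scal. rewrite Rabs_left by lra. ring. Qed.

Lemma norm_nonneg x : 0 <= norm x.
Proof.
  pose proof (norm_triangle V x (opp x)). rewrite add_opp, norm_zero, norm_opp in H. lra.
Qed.

Lemma add_sub_cancel x y : add (add x y) (opp x) = y.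
Proof.
  rewrite (add_comm V x y), <- add_assoc, add_opp, add_zero. reflexivity.
Qed.

Lemma norm_rev x y : norm y - norm x <= norm (add x y).
Proof.
  pose proof (norm_triangle V (add x y) (opp x)). rewrite add_sub_cancel, norm_opp in H. lra.
Qed.

Lemma norm_rev2 x y : norm x - norm y <= norm (add x y).
Proof. rewrite add_comm. apply norm_rev. Qed.

Lemma scal_zero_r a : scal a (@zero V) = zero.
Proof. rewrite <- (scal_zero_l zero), scal_assoc, Rmult_0_r. reflexivity. Qed.

Lemma conv_ident (u v : V) (h l : R) :
  scal l (add u (scal h v)) = add (scal h (add u (scal l v))) (scal (l - h) u).
Proof.
  rewrite !scal_distr_l, !scal_assoc.
  rewrite <- (add_assoc V (scal h u)), (add_comm V (scal (h*l) v)), add_assoc,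
    <- scal_distr_r. f_equal; f_equal; ring.
Qed.

Lemma norm_scal_pos (a : R) x : 0 <= a -> norm (scal a x) = a * norm x.
Proof. intros; rewrite norm_scal, Rabs_pos_eq; auto. Qed.

End V.

Section Op.
Variables X Y : NormedSpace.
Implicit Types S : X -> Y.

Definition bnd S M := forall x, norm (S x) <= M * norm x.

Lemma opnorm_lub S M : bnd S M -> is_lub (opnorm_set S) (opnorm S).
Proof.
  intros HM. unfold opnorm. apply epsilon_spec.
  apply upper_bound_thm.
  - exists (Rmax M 0). intros r [x [Hx ->]]. eapply Rle_trans; [apply HM|].
    pose proof (norm_nonneg _ x). pose proof (Rmax_l M 0). pose proof (Rmax_r M 0).
    apply Rle_trans with (Rmax M 0 * norm x); [apply Rmult_le_compat_r; lra|]. nra.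
  - exists (norm (S zero)). exists zero. split; [rewrite norm_zero; lra| reflexivity].
Qed.

Lemma opnorm_ge S M x : bnd S M -> norm x <= 1 -> norm (S x) <= opnorm S.
Proof.
  intros HM Hx. destruct (opnorm_lub S M HM) as [H1 _]. apply H1. exists x; auto.
Qed.

Lemma opnorm_near S M : bnd S M -> (forall c x, S (scal c x) = scal c (S x)) ->
  (exists u : X, norm u = 1) ->
  forall d, 0 < d -> exists x, norm x = 1 /\ opnorm S - d < norm (S x).
Proof.
  intros HM Hh [u Hu] d Hd. apply NNPP; intro Hn.
  assert (Hall : forall x, norm x = 1 -> norm (S x) <= opnorm S - d).
  { intros x Hx. apply Rnot_lt_le. intro Hc. apply Hn. exists x; auto. }
  destruct (opnorm_lub S M HM) as [_ H2].
  assert (opnorm S <= opnorm S - d); [|lra].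
  apply H2. intros r [x [Hx ->]].
  destruct (Req_dec (norm x) 0) as [H0|H0].
  - apply norm_eq_zero in H0. subst x.
    rewrite <- (scal_zero_l _ zero), Hh, scal_zero_l, norm_zero.
    pose proof (Hall u Hu). pose proof (norm_nonneg _ (S u)). lra.
  - pose proof (norm_nonneg _ x).
    assert (Hp : 0 < norm x) by lra.
    assert (Hx' : norm (scal (/ norm x) x) = 1).
    { rewrite norm_scal_pos. field; lra. left; apply Rinv_0_lt_compat; lra. }
    pose proof (Hall _ Hx') as Hq. rewrite Hh, norm_scal_pos in Hq by (left; apply Rinv_0_lt_compat; lra).
    pose proof (norm_nonneg _ (S x)).
    assert (norm (S x) <= / norm x * norm (S x)); [|lra].
    rewrite <- (Rmult_1_l (norm (S x))) at 1. apply Rmult_le_compat_r; auto.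
    rewrite <- Rinv_1. apply Rinv_le_contravar; lra.
Qed.

Lemma opnorm_scal S M l : bnd S M -> opnorm (op_scal l S) = Rabs l * opnorm S.
Proof.
  intros HM. apply (is_lub_u (opnorm_set (op_scal l S))).
  - apply (opnorm_lub _ (Rabs l * M)). intros x. unfold op_scal. rewrite norm_scal.
    rewrite Rmult_assoc. apply Rmult_le_compat_l; [apply Rabs_pos|apply HM].
  - destruct (opnorm_lub S M HM) as [H1 H2]. split.
    + intros r [x [Hx ->]]. unfold op_scal. rewrite norm_scal.
      apply Rmult_le_compat_l; [apply Rabs_pos|]. apply H1. exists x; auto.
    + intros b Hb. destruct (Req_dec l 0) as [->|Hl].
      * rewrite Rabs_R0, Rmult_0_l. apply Hb. exists zero. split; [rewrite norm_zero; lra|].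
        unfold op_scal. rewrite scal_zero_l, norm_zero; auto.
      * pose proof (Rabs_pos_lt l Hl).
        assert (opnorm S <= b / Rabs l).
        { apply H2. intros r [x [Hx ->]].
          assert (Rabs l * norm (S x) <= b).
          { apply Hb. exists x. split; auto. unfold op_scal. rewrite norm_scal; auto. }
          apply (Rmult_le_reg_l (Rabs l)); auto. field_simplify; lra. }
        apply (Rmult_le_compat_l (Rabs l)) in H0; [|lra].
        replace (Rabs l * (b / Rabs l)) with b in H0 by (field; lra). lra.
Qed.

End Op.

Lemma sqrt_step t N u0 h a K : 0 < t -> 0 <= N -> t^2 - 2*t*u0 <= N^2 ->
  0 <= u0 <= h*a -> 0 <= a -> 0 < h -> 2*a^2 <= K*t -> 2*K*h^2 <= t -> 0 <= K ->
  t - u0 - K*h^2 <= N.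
Proof.
  intros Ht HN HN2 [Hu0 Hu1] Ha Hh HK1 HK2 HK. destruct (Rle_dec (t - u0 - K*h^2) 0) as [Hc|Hc]; [lra|].
  assert (Hq : (t - u0 - K*h^2)^2 <= N^2).
  { assert ((u0 + K*h^2)^2 <= 2*t*(K*h^2)).
    { assert (u0^2 <= (h*a)^2) by nra.
      assert ((u0 + K*h^2)^2 <= 2*u0^2 + 2*(K*h^2)^2) by (pose proof (pow2_ge_0 (u0 - K*h^2)); nra).
      assert (2*(h*a)^2 <= K*t*h^2) by nra.
      assert (2*(K*h^2)^2 <= K*h^2*t) by (assert (0 <= K*h^2) by nra; nra).
      nra. }
    nra. }
  apply Rsqr_incr_0_var; unfold Rsqr; nra.
Qed.

Lemma final_ineq g g0 t lam eps a eta e2 :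
  0 <= g -> g0 - lam*eps*a - eta <= g -> t/2 <= g0 -> 0 < t ->
  8*eta <= e2*t -> 0 <= e2 < 1 -> 0 <= lam -> 0 <= eps -> 0 <= a -> 0 <= eta ->
  g^2 >= (1 - e2) * g0^2 - 2*eps*sqrt (1 - e2) * g0 * (lam * a).
Proof.
  intros Hg Hgg Hg0t Ht He8 [He0 He1] Hl Hep Ha Het. set (s := sqrt (1 - e2)).
  assert (Hs2 : s*s = 1 - e2) by (apply sqrt_sqrt; lra).
  assert (Hs0 : 0 <= s) by apply sqrt_pos.
  assert (Hs1 : s <= 1 - e2/2).
  { apply Rsqr_incr_0_var; unfold Rsqr; nra. }
  replace (1 - e2) with (s*s) by exact Hs2.
  assert (Hg0 : 0 <= g0) by lra.
  assert (Hm : 0 <= lam*eps*a) by (apply Rmult_le_pos; [apply Rmult_le_pos|]; lra).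
  destruct (Rle_dec (g0 - lam*eps*a) (g0/2)) as [Hw|Hw].
  - assert (s*g0*(s*g0 - 2*eps*lam*a) <= 0).
    { assert (s*g0 <= g0) by nra. assert (0 <= s*g0) by nra.
      assert (s*g0 - 2*eps*lam*a <= 0) by lra. nra. }
    assert (0 <= g^2) by nra. nra.
  - set (w := g0 - lam*eps*a) in *.
    assert (eta <= (1 - s) * w) by nra.
    assert (s * w <= g) by nra.
    assert (0 <= s*w) by nra.
    assert ((s*w)^2 <= g^2) by (apply pow_incr; lra).
    assert (s*s*g0^2 - 2*eps*s*g0*(lam*a) <= (s*w)^2).
    { unfold w. assert (0 <= eps*s*g0*(lam*a)) by
        (repeat apply Rmult_le_pos; nra).
      assert (s*s <= s) by nra. nra. }
    lra.
Qed.

Lemma pointwise (Y : NormedSpace) (u v : Y) t a eps k h K :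
  0 < t -> 0 <= a -> 0 <= eps <= 1 -> 0 < k -> k <= t/2 -> 0 < h -> 0 <= K ->
  norm u <= t -> norm v <= a ->
  t - eps*h*a - 2*K*h^2 <= norm (add u (scal h v)) ->
  t - k <= norm u -> k < norm v ->
  8 * (h * (a + 2*K*(2*t/k))) < t ->
  forall lam, 0 <= lam ->
  (norm (add u (scal lam v)))^2 >=
    (1 - 8 * (h * (a + 2*K*(2*t/k))) / t) * (norm u)^2
    - 2*eps*sqrt (1 - 8 * (h * (a + 2*K*(2*t/k))) / t) * norm u * (lam * a).
Proof.
  intros Ht Ha [He0 He1] Hk Hkt Hh HK Hu Hv HG Hu0 Hvk Heta lam Hl.
  set (L := 2*t/k) in *.
  set (eta := h * (a + 2*K*L)) in *.
  assert (HL : 0 < L) by (unfold L; apply Rdiv_lt_0_compat; lra).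
  assert (HLk : L * k = 2*t) by (unfold L; field; lra).
  assert (Heta0 : 0 <= eta) by (unfold eta; apply Rmult_le_pos; [lra|]; nra).
  pose proof (norm_nonneg _ u). pose proof (norm_nonneg _ v).
  set (g := norm (add u (scal lam v))).
  assert (Hg0 : 0 <= g) by apply norm_nonneg.
  assert (Hgb : norm u - lam*eps*a - eta <= g).
  { destruct (Rle_dec lam h) as [C1|C1].
    - pose proof (norm_rev2 _ u (scal lam v)). rewrite norm_scal_pos in H1 by lra.
      fold g in H1.
      assert (lam * norm v <= lam * a) by (apply Rmult_le_compat_l; lra).
      assert (lam*a*(1-eps) <= lam*a) by (assert (0 <= lam*a) by nra; nra).
      assert (lam*a <= h*a) by nra.
      assert (h*a <= eta) by (unfold eta; assert (0 <= h*(K*L)) by (apply Rmult_le_pos; [lra|apply Rmult_le_pos; lra]); nra).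
      replace (lam*a*(1-eps)) with (lam*a - lam*eps*a) in * by ring. lra.
    - destruct (Rle_dec L lam) as [C2|C2].
      + pose proof (norm_rev _ u (scal lam v)). rewrite norm_scal_pos in H1 by lra.
        fold g in H1.
        assert (L * k <= lam * norm v) by (apply Rmult_le_compat; lra).
        assert (0 <= lam*eps*a) by (apply Rmult_le_pos; [apply Rmult_le_pos|]; lra).
        lra.
      + pose proof (conv_ident _ u v h lam) as Hid.
        pose proof (f_equal norm Hid) as Hn.
        pose proof (norm_triangle _ (scal h (add u (scal lam v))) (scal (lam - h) u)).
        rewrite <- Hn, !norm_scal_pos in H1 by lra. fold g in H1.
        set (G := norm (add u (scal h v))) in *.
        assert (lam * (t - eps*h*a - 2*K*h^2) <= lam * G) by (apply Rmult_le_compat_l; lra).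
        assert (Hf : h * (norm u - lam*eps*a - eta) <= h * g); [|apply Rmult_le_reg_l in Hf; lra].
        assert (lam * (t - norm u) >= 0) by nra.
        assert (lam <= L) by lra. assert (0 <= 2*K*h) by nra.
        assert (2*K*h*lam <= 2*K*h*L) by (apply Rmult_le_compat_l; lra).
        unfold eta. nra. }
  apply (final_ineq g (norm u) t lam eps a eta); auto; try lra.
  - unfold Rdiv. rewrite Rmult_assoc, Rinv_l; lra.
  - split. apply Rmult_le_pos; [lra| left; apply Rinv_0_lt_compat; lra].
    apply (Rmult_lt_reg_r t); auto. unfold Rdiv. rewrite Rmult_assoc, Rinv_l; lra.
Qed.

Definition qn (n : nat) : R := / (INR n + 1).

Lemma qn_pos n : 0 < qn n.
Proof. unfold qn. apply Rinv_0_lt_compat. pose proof (pos_INR n). lra. Qed.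

Lemma qn_le1 n : qn n <= 1.
Proof. unfold qn. rewrite <- Rinv_1. apply Rinv_le_contravar; [lra|]. pose proof (pos_INR n); lra. Qed.

Lemma cv_q (u : nat -> R) l C : (forall n, Rabs (u n - l) <= C * qn n) -> Un_cv u l.
Proof.
  intros Hb e He.
  assert (HC : 0 < Rabs C + 1) by (pose proof (Rabs_pos C); lra).
  destruct (archimed_cor1 (e / (Rabs C + 1))) as [N [HN1 HN2]].
  { apply Rdiv_lt_0_compat; lra. }
  exists N. intros n Hn. unfold Rdist. eapply Rle_lt_trans; [apply Hb|].
  assert (HNpos : 0 < INR N) by (apply lt_0_INR; auto).
  assert (Hq : qn n <= / INR N).
  { unfold qn. apply Rinv_le_contravar; auto. apply le_INR in Hn. lra. }
  pose proof (qn_pos n).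
  assert (C * qn n <= (Rabs C + 1) * qn n).
  { apply Rmult_le_compat_r; [lra|]. pose proof (Rle_abs C); lra. }
  assert ((Rabs C + 1) * qn n < (Rabs C + 1) * (e / (Rabs C + 1))).
  { apply Rmult_lt_compat_l; lra. }
  replace ((Rabs C + 1) * (e / (Rabs C + 1))) with e in H1 by (field; lra). lra.
Qed.

Section Core.
Variables X Y : NormedSpace.
Variables (T B : X -> Y) (t a eps k : R).
Hypotheses (ht : 0 < t) (ha : 0 <= a) (he : 0 <= eps <= 1) (hk : 0 < k) (hkt : k <= t/2).
Hypothesis hTb : forall x, norm x = 1 -> norm (T x) <= t.
Hypothesis hBb : forall x, norm x = 1 -> norm (B x) <= a.
Hypothesis hkap : forall x, norm x = 1 -> t - k <= norm (T x) -> k < norm (B x).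
Hypothesis hnear : forall h d, 0 < h -> 0 < d -> exists x, norm x = 1 /\
  exists N, 0 <= N /\ t^2 - 2*eps*t*(h*a) <= N^2 /\ N - d <= norm (add (T x) (scal h (B x))).

Lemma core : exists (x : nat -> X) (en : nat -> R),
  (forall n, norm (x n) = 1) /\ (forall n, 0 < en n) /\ Un_cv en 0 /\
  Un_cv (fun n => norm (T (x n))) t /\
  (forall n l, 0 <= l ->
     (norm (add (T (x n)) (scal l (B (x n)))))^2 >=
     (1 - (en n)^2) * (norm (T (x n)))^2
     - 2*eps*sqrt (1 - (en n)^2) * norm (T (x n)) * (l * a)).
Proof.
  set (K := 2*a^2/t + 1).
  assert (HK : 2*a^2 <= K*t) by (unfold K; field_simplify; [|lra]; unfold Rdiv; nra).
  assert (HK0 : 1 <= K) by (unfold K; assert (0 <= 2*a^2/t) by (unfold Rdiv; apply Rmult_le_pos; [nra| left; apply Rinv_0_lt_compat; lra]); lra).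
  set (L := 2*t/k).
  assert (HL : 0 < L) by (unfold L; apply Rdiv_lt_0_compat; lra).
  set (M := 2*a + 2*K + 8*(a + 2*K*L) + 1).
  assert (HM : 0 < M) by (unfold M; nra).
  set (H := Rmin 1 (k/M)).
  assert (HH0 : 0 < H) by (unfold H; apply Rmin_pos; [lra| apply Rdiv_lt_0_compat; lra]).
  assert (HH1 : H <= 1) by apply Rmin_l.
  assert (HHM : M * H <= k).
  { assert (H <= k/M) by apply Rmin_r. apply (Rmult_le_compat_l M) in H0; [|lra].
    replace (M * (k/M)) with k in H0 by (field; lra). lra. }
  set (h := fun n => H * (qn n)^2).
  assert (Hh : forall n, 0 < h n /\ h n <= 1 /\ M * h n <= k /\ (h n)^2 <= h n /\ h n <= H * qn n).
  { intros n. pose proof (qn_pos n). pose proof (qn_le1 n). unfold h.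
    assert (0 < qn n ^2) by nra. assert (qn n ^ 2 <= 1) by nra.
    assert (qn n ^ 2 <= qn n) by nra.
    assert (0 < H * qn n ^ 2) by nra.
    assert (H * qn n ^ 2 <= H) by (rewrite <- (Rmult_1_r H) at 2; apply Rmult_le_compat_l; lra).
    assert (M * (H * qn n ^ 2) <= k) by (apply Rle_trans with (M*H); [apply Rmult_le_compat_l; lra| lra]).
    assert (H * qn n ^ 2 <= H * qn n) by (apply Rmult_le_compat_l; lra).
    repeat split; try nra. }
  set (P := fun n x => norm x = 1 /\ exists N, 0 <= N /\ t^2 - 2*eps*t*(h n*a) <= N^2 /\
                N - K * (h n)^2 <= norm (add (T x) (scal (h n) (B x)))).
  assert (HP : forall n, exists x, P n x).
  { intros n. destruct (Hh n) as [H1 _]. apply hnear; auto. assert (0 < h n ^2) by nra. nra. }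
  set (x := fun n => epsilon (inhabits zero) (P n)).
  assert (Hx : forall n, P n (x n)) by (intros n; apply epsilon_spec, HP).
  set (c := 8 * H * (a + 2*K*L) / t).
  assert (Hc : 0 < c) by (unfold c; apply Rdiv_lt_0_compat; [|lra]; assert (0 < a + 2*K*L) by nra; nra).
  set (en := fun n => sqrt c * qn n).
  assert (Hen2 : forall n, (en n)^2 = 8 * (h n * (a + 2*K*(2*t/k))) / t).
  { intros n. unfold en, h. fold L. rewrite Rpow_mult_distr, pow2_sqrt by lra. unfold c.
    field. lra. }
  assert (Hpt : forall n, t - k <= norm (T (x n)) /\ norm (T (x n)) <= t /\
            t - (2*a + 2*K) * h n <= norm (T (x n)) /\
            t - eps * h n * a - 2*K*(h n)^2 <= norm (add (T (x n)) (scal (h n) (B (x n))))).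
  { intros n. destruct (Hx n) as [Hn1 [N [HN0 [HN1 HN2]]]].
    destruct (Hh n) as [Hh0 [Hh1 [Hh2 [Hh3 Hh4]]]].
    assert (HG : t - eps * h n * a - 2*K*(h n)^2 <= norm (add (T (x n)) (scal (h n) (B (x n))))).
    { assert (t - eps * h n * a - K * (h n)^2 <= N); [|lra].
      assert (A1 : t^2 - 2*t*(eps*h n*a) <= N^2).
      { replace (2*t*(eps*h n*a)) with (2*eps*t*(h n*a)) by ring. exact HN1. }
      assert (A2 : 0 <= eps * h n * a <= h n * a).
      { assert (0 <= h n * a) by nra. split; nra. }
      assert (A3 : 2*K*(h n)^2 <= t).
      { assert (M * h n <= k) by lra. unfold M in H0.
        assert (0 <= a + 2*K*L) by nra. nra. }
      apply (sqrt_step t N (eps * h n * a) (h n) a K); auto; lra. }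
    pose proof (norm_triangle _ (T (x n)) (scal (h n) (B (x n)))).
    rewrite norm_scal_pos in H0 by lra.
    pose proof (hBb _ Hn1). pose proof (hTb _ Hn1).
    assert (h n * norm (B (x n)) <= h n * a) by (apply Rmult_le_compat_l; lra).
    assert (eps * h n * a <= h n * a) by (assert (0 <= h n * a) by nra; nra).
    assert (t - (2*a + 2*K) * h n <= norm (T (x n))) by nra.
    assert ((2*a + 2*K) * h n <= k).
    { assert (M * h n <= k) by lra. unfold M in H6. assert (0 <= a + 2*K*L) by nra. nra. }
    repeat split; lra. }
  exists x, en. repeat split.
  - intros n. apply (Hx n).
  - intros n. unfold en. apply Rmult_lt_0_compat; [apply sqrt_lt_R0; lra| apply qn_pos].
  - apply (cv_q _ _ (sqrt c)). intros n. unfold en. rewrite Rminus_0_r, Rabs_pos_eq. lra.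
    apply Rmult_le_pos; [apply sqrt_pos| left; apply qn_pos].
  - apply (cv_q _ _ ((2*a+2*K)*H)). intros n.
    destruct (Hpt n) as [_ [H2 [H3 _]]]. destruct (Hh n) as [_ [_ [_ [_ H5]]]].
    rewrite Rabs_left1 by lra.
    assert ((2*a+2*K) * h n <= (2*a+2*K) * (H * qn n)) by (apply Rmult_le_compat_l; nra). nra.
  - intros n l Hl. rewrite Hen2.
    destruct (Hpt n) as [H1 [H2 [H3 H4]]]. destruct (Hh n) as [Hh0 [Hh1 [Hh2 [Hh3 Hh4]]]].
    destruct (Hx n) as [Hn1 _].
    assert (B1 : norm (B (x n)) <= a) by (apply hBb; auto).
    assert (B2 : k < norm (B (x n))) by (apply hkap; auto).
    assert (B3 : 8 * (h n * (a + 2*K*(2*t/k))) < t).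
    { fold L. assert (M * h n <= k) by lra. unfold M in H0.
      assert (0 <= a + 2*K*L) by nra. nra. }
    apply (pointwise Y (T (x n)) (B (x n)) t a eps k (h n) K); auto; lra.
Qed.
End Core.

Lemma cv_const c : Un_cv (fun _ => c) c.
Proof. intros e He. exists 0%nat. intros. unfold Rdist. rewrite Rminus_diag, Rabs_R0. lra. Qed.

Lemma lim_le (u : nat -> R) L c : (forall n, u n <= c) -> Un_cv u L -> L <= c.
Proof.
  intros Hu Hc. apply Rnot_lt_le. intro Hlt.
  destruct (Hc (L - c)) as [N HN]; [lra|].
  specialize (HN N (Nat.le_refl N)). unfold Rdist in HN. specialize (Hu N).
  rewrite Rabs_left1 in HN by lra. lra.
Qed.

Lemma limit_b (g e : nat -> R) t eps la N :
  Un_cv g t -> Un_cv e 0 -> 0 <= eps -> 0 <= la -> (forall n, 0 <= g n) ->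
  (forall n, 0 < e n) ->
  (forall n, N^2 >= (1 - (e n)^2) * (g n)^2 - 2*eps*sqrt (1 - (e n)^2) * g n * la) ->
  t^2 - 2*eps*t*la <= N^2.
Proof.
  intros Hg He Heps Hla Hg0 He0 HN.
  set (u := fun n => (1 - e n * e n) * (g n * g n) - (2*eps*la) * g n).
  assert (Hu : Un_cv u ((1 - 0*0) * (t*t) - (2*eps*la)*t)).
  { unfold u. apply CV_minus. apply CV_mult. apply CV_minus. apply cv_const.
    apply CV_mult; auto. apply CV_mult; auto. apply CV_mult; auto. apply cv_const. }
  replace (t^2 - 2*eps*t*la) with ((1 - 0*0) * (t*t) - (2*eps*la)*t) by ring.
  apply (lim_le u); auto. intros n. specialize (HN n). unfold u.
  destruct (Rle_dec (1 - e n ^2) 0) as [Hc|Hc].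
  - rewrite sqrt_neg_0 in HN by lra.
    assert (0 <= eps*la*g n) by (apply Rmult_le_pos; [apply Rmult_le_pos|]; auto).
    replace ((1 - e n * e n) * (g n * g n)) with ((1 - e n ^ 2) * g n ^ 2) by ring.
    replace (2 * eps * 0 * g n * la) with 0 in HN by ring. lra.
  - assert (Hs : sqrt (1 - e n ^2) <= 1).
    { assert (Hq : sqrt (1 - e n ^2) <= sqrt 1) by (apply sqrt_le_1_alt; pose proof (pow2_ge_0 (e n)); lra).
      rewrite sqrt_1 in Hq; exact Hq. }
    pose proof (sqrt_pos (1 - e n ^2)).
    assert (0 <= eps*la*g n) by (apply Rmult_le_pos; [apply Rmult_le_pos|]; auto).
    assert (eps * sqrt (1 - e n ^2) * g n * la <= eps * g n * la).
    { replace (eps * sqrt (1 - e n ^2) * g n * la) with (sqrt (1 - e n ^2) * (eps*la*g n)) by ring.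
      replace (eps * g n * la) with (1 * (eps*la*g n)) by ring.
      apply Rmult_le_compat_r; lra. }
    replace ((1 - e n * e n) * (g n * g n)) with ((1 - e n ^ 2) * g n ^ 2) by ring.
    replace (2 * eps * sqrt (1 - e n ^ 2) * g n * la) with (2 * (eps * sqrt (1 - e n ^ 2) * g n * la)) in HN by ring.
    lra.
Qed.

Theorem mainTheorem8 (X Y : NormedSpace) (eps : R) (T : X -> Y)
  (heps : 0 <= eps < 1)
  (hT : is_bounded_linear T) (hT0 : T <> (fun _ => zero))
  (A : X -> Y) (hA : is_bounded_linear A) :
  op_bj_eps_orth eps T A <->
  ( (* (a) *)
    (exists x : nat -> X,
        (forall n, norm (x n) = 1) /\
        Un_cv (fun n => norm (T (x n))) (opnorm T) /\
        (exists l : R, Un_cv (fun n => norm (A (x n))) l /\ l <= eps * opnorm A))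
    \/
    (* (b) *)
    (exists (x y : nat -> X) (en dn : nat -> R),
        (forall n, norm (x n) = 1) /\ (forall n, norm (y n) = 1) /\
        (forall n, 0 < en n) /\ (forall n, 0 < dn n) /\
        Un_cv en 0 /\ Un_cv dn 0 /\
        Un_cv (fun n => norm (T (x n))) (opnorm T) /\
        Un_cv (fun n => norm (T (y n))) (opnorm T) /\
        (forall n (l : R), 0 <= l ->
           (norm (add (T (x n)) (scal l (A (x n))))) ^ 2 >=
           (1 - (en n) ^ 2) * (norm (T (x n))) ^ 2
           - 2 * eps * sqrt (1 - (en n) ^ 2) * norm (T (x n))
               * opnorm (op_scal l A)) /\
        (forall n (l : R), l <= 0 ->
           (norm (add (T (y n)) (scal l (A (y n))))) ^ 2 >=
           (1 - (dn n) ^ 2) * (norm (T (y n))) ^ 2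
           - 2 * eps * sqrt (1 - (dn n) ^ 2) * norm (T (y n))
               * opnorm (op_scal l A)))).
Proof.
  destruct hT as [TL1 [TL2 [MT HMT]]]. destruct hA as [AL1 [AL2 [MA HMA]]].
  set (t := opnorm T). set (a := opnorm A).
  set (S := fun l => op_add T (op_scal l A)).
  assert (bS : forall l, bnd X Y (S l) (MT + Rabs l * MA)).
  { intros l x. unfold S, op_add, op_scal.
    eapply Rle_trans; [apply norm_triangle|]. rewrite norm_scal.
    pose proof (HMT x). pose proof (HMA x). pose proof (Rabs_pos l).
    assert (Rabs l * norm (A x) <= Rabs l * (MA * norm x)) by (apply Rmult_le_compat_l; lra).
    nra. }
  assert (hS : forall l c x, S l (scal c x) = scal c (S l x)).
  { intros l c x. unfold S, op_add, op_scal. rewrite TL2, AL2, scal_distr_l, !scal_assoc.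
    rewrite Rmult_comm. reflexivity. }
  assert (Tz : forall x, norm x = 0 -> T x = zero).
  { intros x Hx. apply norm_eq_zero in Hx. subst x.
    rewrite <- (scal_zero_l _ zero), TL2, scal_zero_l. reflexivity. }
  assert (Hu : exists u : X, norm u = 1 /\ 0 < norm (T u)).
  { apply NNPP; intro Hn. apply hT0. apply functional_extensionality. intros x.
    destruct (Req_dec (norm x) 0) as [H0|H0]; [auto|].
    pose proof (norm_nonneg _ x).
    destruct (Req_dec (norm (T x)) 0) as [H1|H1]; [apply norm_eq_zero; auto|].
    exfalso. apply Hn. exists (scal (/ norm x) x).
    assert (0 < / norm x) by (apply Rinv_0_lt_compat; lra).
    rewrite TL2, !norm_scal_pos by lra. split; [field; lra|].
    pose proof (norm_nonneg _ (T x)). apply Rmult_lt_0_compat; lra. }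
  destruct Hu as [u [Hu1 Hu2]].
  assert (bT : bnd X Y T MT) by exact HMT.
  assert (bA : bnd X Y A MA) by exact HMA.
  assert (Ht : 0 < t) by (pose proof (opnorm_ge X Y T MT u bT (Req_le _ _ Hu1)); unfold t; lra).
  assert (Ha : 0 <= a).
  { pose proof (opnorm_ge X Y A MA zero bA). rewrite norm_zero in H.
    pose proof (norm_nonneg _ (A zero)). unfold a; lra. }
  assert (Hsc : forall l, opnorm (op_scal l A) = Rabs l * a).
  { intros l. apply (opnorm_scal X Y A MA l bA). }
  assert (HTb : forall x, norm x <= 1 -> norm (T x) <= t) by (intros; apply (opnorm_ge X Y T MT); auto).
  assert (HAb : forall x, norm x <= 1 -> norm (A x) <= a) by (intros; apply (opnorm_ge X Y A MA); auto).
  assert (HSb : forall l x, norm x <= 1 -> norm (S l x) <= opnorm (S l))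
    by (intros; apply (opnorm_ge X Y _ _ _ (bS l)); auto).
  assert (HSnear : forall l d, 0 < d -> exists x, norm x = 1 /\ opnorm (S l) - d < norm (S l x)).
  { intros l d Hd. apply (opnorm_near X Y (S l) _ (bS l) (hS l)); eauto. }
  assert (HS0 : forall l, 0 <= opnorm (S l)).
  { intros l. pose proof (HSb l zero). rewrite norm_zero in H. pose proof (norm_nonneg _ (S l zero)). lra. }
  split.
  -
    intros Horth.
    assert (HO : forall l, t^2 - 2*eps*t*(Rabs l * a) <= (opnorm (S l))^2).
    { intros l. specialize (Horth l). rewrite Hsc in Horth. fold t in Horth. unfold S. lra. }
    destruct (classic (forall k, 0 < k -> exists x, norm x = 1 /\ t - k <= norm (T x) /\ norm (A x) <= k)) as [Hall|Hnot].
    + left.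
      set (P := fun n x => norm x = 1 /\ t - qn n <= norm (T x) /\ norm (A x) <= qn n).
      set (x := fun n => epsilon (inhabits zero) (P n)).
      assert (Hx : forall n, P n (x n)) by (intros n; apply epsilon_spec, Hall, qn_pos).
      exists x. split; [intros n; apply (Hx n)|]. split.
      * apply (cv_q _ _ 1). intros n. destruct (Hx n) as [H1 [H2 H3]].
        pose proof (HTb (x n) (Req_le _ _ H1)). fold t. rewrite Rabs_left1 by lra. lra.
      * exists 0. split; [|apply Rmult_le_pos; lra].
        apply (cv_q _ _ 1). intros n. destruct (Hx n) as [H1 [H2 H3]].
        rewrite Rminus_0_r, Rabs_pos_eq by apply norm_nonneg. lra.
    + right.
      apply not_all_ex_not in Hnot. destruct Hnot as [k0 Hk0].
      apply imply_to_and in Hk0. destruct Hk0 as [Hk0 Hk1].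
      assert (Hkap0 : forall x, norm x = 1 -> t - k0 <= norm (T x) -> k0 < norm (A x)).
      { intros x H1 H2. apply Rnot_le_lt. intro H3. apply Hk1. exists x. auto. }
      set (k := Rmin k0 (t/2)).
      assert (Hk : 0 < k) by (apply Rmin_pos; lra).
      assert (Hkt : k <= t/2) by apply Rmin_r.
      assert (Hkk : k <= k0) by apply Rmin_l.
      destruct (core X Y T A t a eps k Ht Ha ltac:(lra) Hk Hkt) as [x [en [Hx1 [Hx2 [Hx3 [Hx4 Hx5]]]]]].
      { intros; apply HTb; lra. }
      { intros; apply HAb; lra. }
      { intros x H1 H2. pose proof (Hkap0 x H1 ltac:(lra)). lra. }
      { intros h d Hh Hd. destruct (HSnear h d Hd) as [x [H1 H2]].
        exists x. split; auto. exists (opnorm (S h)). split; [apply HS0|]. split.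
        - specialize (HO h). rewrite Rabs_pos_eq in HO by lra. exact HO.
        - change (S h x) with (add (T x) (scal h (A x))) in H2. lra. }
      set (B := fun z => opp (A z)).
      assert (HB : forall z, norm (B z) = norm (A z)) by (intros; apply norm_opp).
      assert (HBs : forall l z, scal l (B z) = scal (-l) (A z)).
      { intros l z. unfold B. rewrite opp_scal, scal_assoc. f_equal. ring. }
      destruct (core X Y T B t a eps k Ht Ha ltac:(lra) Hk Hkt) as [y [dn [Hy1 [Hy2 [Hy3 [Hy4 Hy5]]]]]].
      { intros; apply HTb; lra. }
      { intros; rewrite HB; apply HAb; lra. }
      { intros z H1 H2. rewrite HB. pose proof (Hkap0 z H1 ltac:(lra)). lra. }
      { intros h d Hh Hd. destruct (HSnear (-h) d Hd) as [z [H1 H2]].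
        exists z. split; auto. exists (opnorm (S (-h))). split; [apply HS0|]. split.
        - specialize (HO (-h)). rewrite Rabs_left1 in HO by lra.
          replace (- - h) with h in HO by ring. exact HO.
        - rewrite HBs. change (S (-h) z) with (add (T z) (scal (-h) (A z))) in H2. lra. }
      exists x, y, en, dn. repeat split; auto.
      * intros n l Hl. rewrite Hsc, Rabs_pos_eq by lra. apply Hx5; auto.
      * intros n l Hl. rewrite Hsc, Rabs_left1 by lra.
        pose proof (Hy5 n (-l) ltac:(lra)) as Hq. rewrite HBs in Hq.
        replace (- - l) with l in Hq by ring. exact Hq.
  -
    intros Hc l. unfold op_bj_eps_orth, bj_eps_orth. fold t. rewrite Hsc. fold (S l).
    assert (Hgoal : t^2 - 2*eps*t*(Rabs l * a) <= (opnorm (S l))^2); [|lra].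
    destruct Hc as [Ha' | Hb'].
    + destruct Ha' as [x [Hx1 [Hx2 [l0 [Hl0 Hl0e]]]]].
      assert (HN : t - Rabs l * l0 <= opnorm (S l)).
      { apply (lim_le (fun n => norm (T (x n)) - Rabs l * norm (A (x n)))).
        - intros n. eapply Rle_trans; [|apply (HSb l (x n)); rewrite Hx1; lra].
          unfold S, op_add, op_scal. pose proof (norm_rev2 _ (T (x n)) (scal l (A (x n)))).
          rewrite norm_scal in H. lra.
        - apply CV_minus; auto. apply CV_mult; auto. apply cv_const. }
      pose proof (Rabs_pos l).
      assert (Rabs l * l0 <= Rabs l * (eps * a)) by (apply Rmult_le_compat_l; lra).
      assert (HN' : t - eps * (Rabs l * a) <= opnorm (S l)) by nra.
      pose proof (HS0 l).
      assert (0 <= eps * (Rabs l * a)) by (apply Rmult_le_pos; [lra|]; apply Rmult_le_pos; lra).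
      destruct (Rle_dec 0 (t - eps * (Rabs l * a))) as [Hp|Hp].
      * assert ((t - eps * (Rabs l * a))^2 <= opnorm (S l) ^2) by (apply pow_incr; lra). nra.
      * assert (0 <= opnorm (S l) ^2) by nra. nra.
    + destruct Hb' as [x [y [en [dn Hb']]]].
      destruct Hb' as [Hx1 [Hy1 [He1 [Hd1 [He2 [Hd2 [Hx3 [Hy3 [Hx4 Hy4]]]]]]]]].
      destruct (Rle_dec 0 l) as [Hl|Hl].
      * rewrite Rabs_pos_eq by lra.
        assert (Hla : 0 <= l * a) by (apply Rmult_le_pos; lra).
        assert (He0 : 0 <= eps) by lra.
        assert (Hg0 : forall n, 0 <= norm (T (x n))) by (intros; apply norm_nonneg).
        apply (limit_b (fun n => norm (T (x n))) en t eps (l * a) (opnorm (S l))); auto.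
        intros n. specialize (Hx4 n l Hl). rewrite Hsc, Rabs_pos_eq in Hx4 by lra.
           pose proof (HSb l (x n) ltac:(rewrite Hx1; lra)).
           change (S l (x n)) with (add (T (x n)) (scal l (A (x n)))) in H.
           pose proof (norm_nonneg _ (add (T (x n)) (scal l (A (x n))))).
           assert ((norm (add (T (x n)) (scal l (A (x n)))))^2 <= opnorm (S l) ^2) by (apply pow_incr; lra).
           lra.
      * rewrite Rabs_left1 by lra.
        assert (Hla : 0 <= -l * a) by (apply Rmult_le_pos; lra).
        assert (He0 : 0 <= eps) by lra.
        assert (Hg0 : forall n, 0 <= norm (T (y n))) by (intros; apply norm_nonneg).
        apply (limit_b (fun n => norm (T (y n))) dn t eps (-l * a) (opnorm (S l))); auto.
        intros n. specialize (Hy4 n l ltac:(lra)). rewrite Hsc, Rabs_left1 in Hy4 by lra.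
           pose proof (HSb l (y n) ltac:(rewrite Hy1; lra)).
           change (S l (y n)) with (add (T (y n)) (scal l (A (y n)))) in H.
           pose proof (norm_nonneg _ (add (T (y n)) (scal l (A (y n))))).
           assert ((norm (add (T (y n)) (scal l (A (y n)))))^2 <= opnorm (S l) ^2) by (apply pow_incr; lra).
           replace (- l * a) with (- l * a) by ring. lra.
Qed.
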